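(* Let $\omega>0$, $-\frac{\pi}{2}<\theta_1<\theta_2<0$, $\mathcal{C}=\{(\varphi,\theta)\in[0,2\pi)\times(\theta_1,\theta_2)\}$, and let $\psi_1\neq\psi_2$ be real constants. Given $\lambda\le 0$ and $\Upsilon\in\mathbb{R}$, let $\Psi_{\lambda,\Upsilon}$ be the unique solution of \[(\Psi'(\theta)\cos\theta)'=-\lambda\Psi(\theta)\cos\theta+\Upsilon\cos\theta-\omega\sin 2\theta,\ \theta\in(\theta_1,\theta_2),\qquad \Psi(\theta_1)=\psi_1,\ \Psi(\theta_2)=\psi_2,\] let $\mathbf{u}^*_{\lambda,\Upsilon}=u^*_{\lambda,\Upsilon}\mathbf{e}_\varphi$ with $u^*_{\lambda,\Upsilon}=-\Psi_{\lambda,\Upsilon}'$ be the corresponding steady zonal solution of the system below, and let $\Omega^*_{\lambda,\Upsilon}$ be its vorticity. Suppose that $\mathbf{u}(t)=u(t)\mathbf{e}_\varphi+v(t)\mathbf{e}_\theta$ is a time-dependent solution (with some pressure $p$) of \begin{align*} & u_t + \frac{uu_\varphi}{\cos\theta} + vu_\theta - uv\tan\theta - 2\omega v\sin\theta = -\frac{p_\varphi}{\cos\theta},\\ & v_t + \frac{uv_\varphi}{\cos\theta} + vv_\theta + u^2\tan\theta + 2\omega u\sin\theta = -p_\theta,\\ & u_\varphi + (v\cos\theta)_\theta = 0 \end{align*} in $\mathcal{C}$, with $v=0$ on $\{\theta=\theta_1\}\cup\{\theta=\theta_2\}$ for all $t\ge0$, with initial data $\mathbf{u}|_{t=0}=\mathbf{u}_0=u_0\mathbf{e}_\varphi+v_0\mathbf{e}_\theta$,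 and let $\Omega(t)$ denote its vorticity, with $\Omega|_{t=0}=\Omega_0$. Then for all $t\ge 0$, \[-\lambda\|\mathbf{u}(t)-\mathbf{u}^*_{\lambda,\Upsilon}\|^2_{L^2(\mathcal{C})}+\|\Omega(t)-\Omega^*_{\lambda,\Upsilon}\|^2_{L^2(\mathcal{C})}=-\lambda\|\mathbf{u}_0-\mathbf{u}^*_{\lambda,\Upsilon}\|^2_{L^2(\mathcal{C})}+\|\Omega_0-\Omega^*_{\lambda,\Upsilon}\|^2_{L^2(\mathcal{C})}.\]
   Context: Spherical coordinates $(\varphi,\theta)$ on the unit sphere: $(\varphi,\theta)\mapsto(\cos\varphi\cos\theta,\sin\varphi\cos\theta,\sin\theta)$, with unit tangent vectors $\mathbf{e}_\varphi,\mathbf{e}_\theta$; all functions are $2\pi$-periodic in $\varphi$. The area element is $d\sigma=\cos\theta\,d\varphi\,d\theta$, and $L^2(\mathcal{C})$ norms are taken with respect to $d\sigma$ (for a vector field $f\mathbf{e}_\varphi+g\mathbf{e}_\theta$, the pointwise norm is $\sqrt{f^2+g^2}$). The vorticity of $u\,\mathbf{e}_\varphi+v\,\mathbf{e}_\theta$ is $\Omega=\frac{1}{\cos\theta}[v_\varphi-(u\cos\theta)_\theta]$. The solution $\mathbf{u}$ is understood to be a classical (smooth) solution. *)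

(* Defs.v *)
From Stdlib Require Import Reals.
From Coquelicot Require Import Coquelicot.
Open Scope R_scope.

(* Fields are functions of (t, phi, theta). Partial derivatives. *)
Definition d_t (f : R -> R -> R -> R) : R -> R -> R -> R :=
  fun t a b => Derive (fun s => f s a b) t.
Definition d_phi (f : R -> R -> R -> R) : R -> R -> R -> R :=
  fun t a b => Derive (fun s => f t s b) a.
Definition d_theta (f : R -> R -> R -> R) : R -> R -> R -> R :=
  fun t a b => Derive (fun s => f t a s) b.

(* C^infinity on R^3: jointly continuous, all first partials exist
   everywhere, and the partials are again C^infinity. *)
CoInductive smooth3 (f : R -> R -> R -> R) : Prop :=
  Smooth3 :
    (forall t a b,
        continuous (fun X : R * R * R => f (fst (fst X)) (snd (fst X)) (snd X)) (t, a, b)) ->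
    (forall t a b,
        ex_derive (fun s => f s a b) t /\
        ex_derive (fun s => f t s b) a /\
        ex_derive (fun s => f t a s) b) ->
    smooth3 (d_t f) -> smooth3 (d_phi f) -> smooth3 (d_theta f) -> smooth3 f.

CoInductive smooth1 (f : R -> R) : Prop :=
  Smooth1 : (forall x, ex_derive f x) -> smooth1 (Derive f) -> smooth1 f.

Definition periodic_phi (f : R -> R -> R -> R) : Prop :=
  forall t a b, f t (a + 2 * PI) b = f t a b.

(* integral over the annulus C = [0,2pi) x (th1,th2) w.r.t. dsigma = cos th dphi dth *)
Definition int_C (th1 th2 : R) (F : R -> R -> R) : R :=
  RInt (fun th => RInt (fun ph => F ph th * cos th) 0 (2 * PI)) th1 th2.

Definition vorticity (u v : R -> R -> R -> R) (t a b : R) : R :=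
  / cos b * (d_phi v t a b - Derive (fun s => u t a s * cos s) b).

Definition ustar (Psi : R -> R) (th : R) : R := - Derive Psi th.
Definition Omegastar (Psi : R -> R) (th : R) : R :=
  / cos th * (- Derive (fun s => ustar Psi s * cos s) th).

Definition Psi_solves (omega lam Ups th1 th2 psi1 psi2 : R) (Psi : R -> R) : Prop :=
  smooth1 Psi /\
  (forall th, th1 < th < th2 ->
     Derive (fun s => Derive Psi s * cos s) th
     = - lam * Psi th * cos th + Ups * cos th - omega * sin (2 * th)) /\
  Psi th1 = psi1 /\ Psi th2 = psi2.

Definition euler_solution (omega th1 th2 : R) (u v p : R -> R -> R -> R) : Prop :=
  smooth3 u /\ smooth3 v /\ smooth3 p /\
  periodic_phi u /\ periodic_phi v /\ periodic_phi p /\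
  (forall t a b, 0 <= t -> th1 < b < th2 ->
     d_t u t a b + u t a b * d_phi u t a b / cos b + v t a b * d_theta u t a b
     - u t a b * v t a b * tan b - 2 * omega * v t a b * sin b
     = - d_phi p t a b / cos b) /\
  (forall t a b, 0 <= t -> th1 < b < th2 ->
     d_t v t a b + u t a b * d_phi v t a b / cos b + v t a b * d_theta v t a b
     + (u t a b) ^ 2 * tan b + 2 * omega * u t a b * sin b
     = - d_theta p t a b) /\
  (forall t a b, 0 <= t -> th1 < b < th2 ->
     d_phi u t a b + Derive (fun s => v t a s * cos s) b = 0) /\
  (forall t a, 0 <= t -> v t a th1 = 0 /\ v t a th2 = 0).

Definition energy (lam th1 th2 : R) (Psi : R -> R) (u v : R -> R -> R -> R) (t : R) : R :=
  - lam * int_C th1 th2 (fun a b => (u t a b - ustar Psi b) ^ 2 + (v t a b) ^ 2)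
  + int_C th1 th2 (fun a b => (vorticity u v t a b - Omegastar Psi b) ^ 2).

(* Main.v *)
Require Import Defs.
From Stdlib Require Import Reals Lra Classical ClassicalEpsilon FunctionalExtensionality.
From Coquelicot Require Import Coquelicot.
Open Scope R_scope.

Definition cont3 (G : R->R->R->R) x y z := forall eps:posreal, exists d:posreal,
  forall x' y' z', Rabs (x'-x) < d -> Rabs (y'-y) < d -> Rabs (z'-z) < d ->
  Rabs (G x' y' z' - G x y z) < eps.

Definition C3 (G : R->R->R->R) x y z :=
  continuous (fun X : R * R * R => G (fst (fst X)) (snd (fst X)) (snd X)) (x, y, z).

Lemma C3_cont3 G x y z : C3 G x y z -> cont3 G x y z.
Proof.
intros H eps.
assert (H1 := H (ball (G x y z) eps) (locally_ball _ _)).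
destruct H1 as [d Hd].
exists d. intros x' y' z' h1 h2 h3.
apply (Hd (x', y', z')).
split; [split|]; simpl; assumption.
Qed.

Lemma cont3_C3 G x y z : cont3 G x y z -> C3 G x y z.
Proof.
intros H P [eps HP].
destruct (H eps) as [d Hd].
exists d. intros [[x' y'] z'] [[h1 h2] h3]. simpl in *.
apply HP. apply Hd; assumption.
Qed.

Lemma C3_plus f g x y z : C3 f x y z -> C3 g x y z -> C3 (fun t a b => f t a b + g t a b) x y z.
Proof. intros. apply (continuous_plus _ _ _ H H0). Qed.
Lemma C3_mult f g x y z : C3 f x y z -> C3 g x y z -> C3 (fun t a b => f t a b * g t a b) x y z.
Proof. intros. apply (continuous_mult _ _ _ H H0). Qed.
Lemma C3_opp f x y z : C3 f x y z -> C3 (fun t a b => - f t a b) x y z.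
Proof. intros. apply (continuous_opp _ _ H). Qed.
Lemma C3_minus f g x y z : C3 f x y z -> C3 g x y z -> C3 (fun t a b => f t a b - g t a b) x y z.
Proof. intros. apply C3_plus; auto. apply C3_opp; auto. Qed.
Lemma C3_const c x y z : C3 (fun _ _ _ => c) x y z.
Proof. apply continuous_const. Qed.
Lemma C3_pow f n x y z : C3 f x y z -> C3 (fun t a b => f t a b ^ n) x y z.
Proof. intros H. induction n. apply C3_const. simpl. apply C3_mult; auto. Qed.
Lemma C3_fun3 (h : R -> R) x y z : continuous h z -> C3 (fun _ _ b => h b) x y z.
Proof.
intros H. unfold C3.
apply (continuous_comp (fun X : R*R*R => snd X) h). apply continuous_snd. exact H.
Qed.
Lemma C3_inv f x y z : C3 f x y z -> f x y z <> 0 -> C3 (fun t a b => / f t a b) x y z.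
Proof.
intros H Hn. unfold C3.
apply (continuous_comp (fun X : R*R*R => f (fst (fst X)) (snd (fst X)) (snd X)) Rinv). exact H.
apply continuous_Rinv. exact Hn.
Qed.

Lemma sm_C3 f : smooth3 f -> forall t a b, C3 f t a b.
Proof. intros H; destruct H; auto. Qed.
Lemma sm_ex f : smooth3 f -> forall t a b,
  ex_derive (fun s => f s a b) t /\ ex_derive (fun s => f t s b) a /\ ex_derive (fun s => f t a s) b.
Proof. intros H; destruct H; auto. Qed.
Lemma sm_t f : smooth3 f -> smooth3 (d_t f). Proof. intros H; destruct H; auto. Qed.
Lemma sm_phi f : smooth3 f -> smooth3 (d_phi f). Proof. intros H; destruct H; auto. Qed.
Lemma sm_th f : smooth3 f -> smooth3 (d_theta f). Proof. intros H; destruct H; auto. Qed.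

Lemma cont3_perm f x y z : cont3 f x y z -> cont3 (fun x y z => f x z y) x z y.
Proof. intros H eps. destruct (H eps) as [d Hd]. exists d. intros. apply Hd; auto. Qed.
Lemma cont3_perm2 f x y z : cont3 f x y z -> cont3 (fun x y z => f y x z) y x z.
Proof. intros H eps. destruct (H eps) as [d Hd]. exists d. intros. apply Hd; auto. Qed.

Lemma Kunif (F : R->R->R->R) x0 y0 lo hi :
  (forall a, lo <= a <= hi -> cont3 F x0 y0 a) ->
  forall eps : posreal, exists d : posreal, forall x y a,
   Rabs (x - x0) < d -> Rabs (y - y0) < d -> lo <= a <= hi ->
   Rabs (F x y a - F x0 y0 a) < eps.
Proof.
intros Hc eps.
assert (He2 : 0 < eps/2) by (destruct eps; simpl; lra).
set (e2 := mkposreal _ He2).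
assert (Hex : forall a, exists d : posreal, lo <= a <= hi -> forall x' y' z',
  Rabs (x'-x0) < d -> Rabs (y'-y0) < d -> Rabs (z'-a) < d ->
  Rabs (F x' y' z' - F x0 y0 a) < e2).
{ intros a. destruct (Rle_dec lo a) as [h1|h1]; [destruct (Rle_dec a hi) as [h2|h2]|].
  - destruct (Hc a (conj h1 h2) e2) as [d Hd]. exists d. intros _; apply Hd.
  - exists (mkposreal 1 Rlt_0_1). intros [_ h]; lra.
  - exists (mkposreal 1 Rlt_0_1). intros [h _]; lra. }
set (delta := fun a => proj1_sig (constructive_indefinite_description _ (Hex a))).
assert (Hdelta : forall a, lo <= a <= hi -> forall x' y' z',
  Rabs (x'-x0) < delta a -> Rabs (y'-y0) < delta a -> Rabs (z'-a) < delta a ->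
  Rabs (F x' y' z' - F x0 y0 a) < e2).
{ intros a. exact (proj2_sig (constructive_indefinite_description _ (Hex a))). }
clearbody delta.
destruct (compactness_value_1d lo hi delta) as [d Hd].
exists d. intros x y a hx hy ha.
destruct (Rlt_dec (Rabs (F x y a - F x0 y0 a)) eps) as [ok|nok]; [exact ok|].
exfalso. apply (Hd a ha). intros [t0 [ht0 [hat0 hdt0]]].
apply nok.
assert (A1 := Hdelta t0 ht0 x y a ltac:(lra) ltac:(lra) hat0).
assert (A2 := Hdelta t0 ht0 x0 y0 a ltac:(rewrite Rminus_eq_0, Rabs_R0; destruct (delta t0); simpl; lra)
   ltac:(rewrite Rminus_eq_0, Rabs_R0; destruct (delta t0); simpl; lra) hat0).
simpl in A1, A2.
replace (F x y a - F x0 y0 a) with ((F x y a - F x0 y0 t0) - (F x0 y0 a - F x0 y0 t0)) by ring.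
eapply Rle_lt_trans. apply Rabs_triang. rewrite Rabs_Ropp. lra.
Qed.

Lemma cont3_z F x y z : cont3 F x y z -> continuous (F x y) z.
Proof.
intros H P [e HP]. destruct (H e) as [d Hd]. exists d. intros z' Hz'. apply HP.
change (Rabs (F x y z' - F x y z) < e). apply Hd; auto; rewrite Rminus_eq_0, Rabs_R0; apply cond_pos.
Qed.
Lemma cont3_y F x y z : cont3 F x y z -> continuous (fun y => F x y z) y.
Proof.
intros H P [e HP]. destruct (H e) as [d Hd]. exists d. intros z' Hz'. apply HP.
change (Rabs (F x z' z - F x y z) < e). apply Hd; auto; rewrite Rminus_eq_0, Rabs_R0; apply cond_pos.
Qed.
Lemma cont3_x F x y z : cont3 F x y z -> continuous (fun x => F x y z) x.
Proof.
intros H P [e HP]. destruct (H e) as [d Hd]. exists d. intros z' Hz'. apply HP.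
change (Rabs (F z' y z - F x y z) < e). apply Hd; auto; rewrite Rminus_eq_0, Rabs_R0; apply cond_pos.
Qed.

Definition openS (S : R -> Prop) := forall y, S y -> exists d : posreal, forall y', Rabs (y' - y) < d -> S y'.

Lemma Kint (F : R->R->R->R) x0 y0 lo hi (S : R -> Prop) :
  lo <= hi -> openS S -> S y0 ->
  (forall x y a, S y -> lo <= a <= hi -> cont3 F x y a) ->
  continuity_2d_pt (fun x y => RInt (F x y) lo hi) x0 y0.
Proof.
intros Hlh HS Hy0 Hc eps.
assert (He : 0 < eps / (hi - lo + 1)).
{ apply Rdiv_lt_0_compat. apply cond_pos. lra. }
destruct (Kunif F x0 y0 lo hi (fun a ha => Hc x0 y0 a Hy0 ha) (mkposreal _ He)) as [d1 Hd1].
destruct (HS y0 Hy0) as [d2 Hd2].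
assert (Hd : 0 < Rmin d1 d2) by (apply Rmin_pos; apply cond_pos).
exists (mkposreal _ Hd). simpl. intros x y hx hy.
assert (hx1 : Rabs (x - x0) < d1) by (eapply Rlt_le_trans; [exact hx| apply Rmin_l]).
assert (hy1 : Rabs (y - y0) < d1) by (eapply Rlt_le_trans; [exact hy| apply Rmin_l]).
assert (hy2 : Rabs (y - y0) < d2) by (eapply Rlt_le_trans; [exact hy| apply Rmin_r]).
assert (Sy := Hd2 y hy2).
assert (E1 : ex_RInt (F x y) lo hi).
{ apply (ex_RInt_continuous (V := R_CompleteNormedModule)). intros z hz. rewrite Rmin_left, Rmax_right in hz by lra.
  apply cont3_z. apply Hc; auto. }
assert (E2 : ex_RInt (F x0 y0) lo hi).
{ apply (ex_RInt_continuous (V := R_CompleteNormedModule)). intros z hz. rewrite Rmin_left, Rmax_right in hz by lra.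
  apply cont3_z. apply Hc; auto. }
assert (Eq := RInt_minus (V := R_CompleteNormedModule) (F x y) (F x0 y0) lo hi E1 E2).
unfold minus, plus, opp in Eq; simpl in Eq.
replace (RInt (F x y) lo hi - RInt (F x0 y0) lo hi) with (RInt (fun a => F x y a - F x0 y0 a) lo hi).
eapply Rle_lt_trans.
apply abs_RInt_le_const with (M := eps / (hi - lo + 1)); auto.
{ apply (ex_RInt_minus (V := R_NormedModule)); auto. }
intros t ht. left. apply Hd1; auto.
apply Rlt_le_trans with ((hi - lo + 1) * (eps / (hi - lo + 1))).
apply Rmult_lt_compat_r; auto; lra.
right. field. lra.
Qed.

Lemma cont3_2d12 F x y z : cont3 F x y z -> continuity_2d_pt (fun u v => F u v z) x y.
Proof.
intros H eps. destruct (H eps) as [d Hd]. exists d. intros u v hu hv. apply Hd; auto.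
rewrite Rminus_eq_0, Rabs_R0; apply cond_pos.
Qed.

Lemma c2d_y h x y : continuity_2d_pt h x y -> continuous (h x) y.
Proof.
intros H P [e HP]. destruct (H e) as [d Hd]. exists d. intros z' Hz'. apply HP.
change (Rabs (h x z' - h x y) < e). apply Hd; auto. rewrite Rminus_eq_0, Rabs_R0; apply cond_pos.
Qed.

Lemma dbl_deriv (f df : R->R->R->R) lo hi c d (S : R -> Prop) t0 :
 lo <= hi -> c <= d -> openS S -> (forall b, c <= b <= d -> S b) ->
 (forall t a b, S b -> cont3 f t a b) ->
 (forall t a b, S b -> is_derive (fun s => f s a b) t (df t a b)) ->
 (forall t a b, S b -> cont3 df t a b) ->
 is_derive (fun t => RInt (fun b => RInt (fun a => f t a b) lo hi) c d) t0
   (RInt (fun b => RInt (fun a => df t0 a b) lo hi) c d).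
Proof.
intros Hlh Hcd HS HcdS Hf Hd Hdf.
set (g := fun t b => RInt (fun a => f t a b) lo hi).
assert (St1 : forall t b, S b -> is_derive (fun s => g s b) t (RInt (fun a => df t a b) lo hi)).
{ intros t b Sb.
  assert (K := is_derive_RInt_param (fun s a => f s a b) lo hi t).
  replace (RInt (fun a => df t a b) lo hi) with (RInt (fun a => Derive (fun u => f u a b) t) lo hi).
  apply K.
  - apply filter_forall. intros x a _. exists (df x a b). apply Hd; auto.
  - intros a _. apply continuity_2d_pt_ext with (f := fun u v => df u v b).
    intros; symmetry; apply is_derive_unique; apply Hd; auto.
    apply cont3_2d12. apply Hdf; auto.
  - apply filter_forall. intros x. apply (ex_RInt_continuous (V := R_CompleteNormedModule)).
    intros z _. apply (cont3_y f x z b). apply Hf; auto.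
  - apply RInt_ext. intros x _. apply is_derive_unique; apply Hd; auto. }
assert (Cg : forall x b, S b -> continuity_2d_pt g x b).
{ intros x b Sb. unfold g.
  apply (Kint (fun u v a => f u a v) x b lo hi S); auto.
  intros; apply (cont3_perm f); apply Hf; auto. }
assert (K := is_derive_RInt_param g c d t0).
replace (RInt (fun b => RInt (fun a => df t0 a b) lo hi) c d)
  with (RInt (fun b => Derive (fun u => g u b) t0) c d).
apply K.
- apply filter_forall. intros x b hb. eexists. apply St1. apply HcdS.
  rewrite Rmin_left, Rmax_right in hb by lra. exact hb.
- intros b hb. rewrite Rmin_left, Rmax_right in hb by lra.
  apply continuity_2d_pt_ext_loc with (f := fun u v => RInt (fun a => df u a v) lo hi).
  + destruct (HS b (HcdS b hb)) as [e He]. exists e. intros u v _ hv.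
    symmetry. apply is_derive_unique. apply St1. apply He; auto.
  + apply (Kint (fun u v a => df u a v) t0 b lo hi S); auto.
    intros; apply (cont3_perm df); apply Hdf; auto.
- apply filter_forall. intros x. apply (ex_RInt_continuous (V := R_CompleteNormedModule)).
  intros z hz. rewrite Rmin_left, Rmax_right in hz by lra.
  apply c2d_y. apply Cg. apply HcdS; auto.
- apply RInt_ext. intros x hx. rewrite Rmin_left, Rmax_right in hx by lra.
  apply is_derive_unique. apply St1. apply HcdS; lra.
Qed.

Lemma RInt_zero (f : R -> R) a b : (forall x, f x = 0) -> RInt f a b = 0.
Proof.
intros H. rewrite (RInt_ext f (fun _ => 0)) by auto.
rewrite (RInt_const (V := R_CompleteNormedModule)). unfold scal; simpl. unfold mult; simpl. ring.
Qed.

Lemma flux_zero (A B dA dB : R->R->R->R) t lo hi c d (S : R -> Prop) :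
 lo <= hi -> c <= d -> openS S -> (forall b, c <= b <= d -> S b) ->
 (forall a b, S b -> is_derive (fun s => A t s b) a (dA t a b)) ->
 (forall a b, S b -> cont3 dA t a b) ->
 (forall b, c < b < d -> A t hi b = A t lo b) ->
 (forall a b, S b -> is_derive (fun s => B t a s) b (dB t a b)) ->
 (forall x a b, S b -> cont3 B x a b) ->
 (forall x a b, S b -> cont3 dB x a b) ->
 (forall a, B t a c = 0) -> (forall a, B t a d = 0) ->
 RInt (fun b => RInt (fun a => dA t a b + dB t a b) lo hi) c d = 0.
Proof.
intros Hlh Hcd HS HcdS HA HdA Hper HB HBc HdB Bc Bd.
set (h := fun y => RInt (fun a => B t a y) lo hi).
assert (Dh : forall y, S y -> is_derive h y (RInt (fun a => dB t a y) lo hi)).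
{ intros y Sy.
  assert (K := is_derive_RInt_param (fun z a => B t a z) lo hi y).
  replace (RInt (fun a => dB t a y) lo hi) with (RInt (fun a => Derive (fun u => B t a u) y) lo hi).
  apply K.
  - destruct (HS y Sy) as [e He]. exists e. intros z hz a _. eexists. apply HB. apply He. exact hz.
  - intros a _. apply continuity_2d_pt_ext_loc with (f := fun u v => dB t v u).
    + destruct (HS y Sy) as [e He]. exists e. intros u v hu _.
      symmetry; apply is_derive_unique; apply HB. apply He; auto.
    + apply (cont3_2d12 (fun u v _ => dB t v u) y a t).
      intros eps. destruct (HdB t a y Sy eps) as [dd Hdd]. exists dd. intros x' y' z' h1 h2 h3.
      apply Hdd; auto. rewrite Rminus_eq_0, Rabs_R0; apply cond_pos.
  - destruct (HS y Sy) as [e He]. exists e. intros z hz.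
    apply (ex_RInt_continuous (V := R_CompleteNormedModule)).
    intros a _. apply (cont3_y B t a z). apply HBc. apply He; auto.
  - apply RInt_ext. intros x _. apply is_derive_unique; apply HB; auto. }
transitivity (RInt (Derive h) c d).
- apply RInt_ext. intros b hb. rewrite Rmin_left, Rmax_right in hb by lra.
  assert (Sb : S b) by (apply HcdS; lra).
  rewrite (is_derive_unique _ _ _ (Dh b Sb)).
  assert (E1 : ex_RInt (fun a => dA t a b) lo hi).
  { apply (ex_RInt_continuous (V := R_CompleteNormedModule)). intros a _.
    apply (cont3_y dA t a b). apply HdA; auto. }
  assert (E2 : ex_RInt (fun a => dB t a b) lo hi).
  { apply (ex_RInt_continuous (V := R_CompleteNormedModule)). intros a _.
    apply (cont3_y dB t a b). apply HdB; auto. }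
  assert (Hp : RInt (fun a => dA t a b + dB t a b) lo hi = RInt (fun a => dA t a b) lo hi + RInt (fun a => dB t a b) lo hi)
    by exact (RInt_plus (V := R_CompleteNormedModule) _ _ _ _ E1 E2).
  rewrite Hp.
  replace (RInt (fun a => dA t a b) lo hi) with (RInt (Derive (fun s => A t s b)) lo hi).
  rewrite RInt_Derive. rewrite Hper by lra. rewrite Rminus_eq_0, Rplus_0_l. reflexivity.
  + intros a _. eexists; apply HA; auto.
  + intros a _. apply continuous_ext_loc with (g := fun s => dA t s b).
    apply filter_forall. intros; symmetry; apply is_derive_unique; apply HA; auto.
    apply (cont3_y dA t a b). apply HdA; auto.
  + apply RInt_ext. intros; apply is_derive_unique; apply HA; auto.
- rewrite RInt_Derive.
  + unfold h. rewrite (RInt_zero _ lo hi Bd), (RInt_zero _ lo hi Bc). apply Rminus_eq_0.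
  + intros b hb. rewrite Rmin_left, Rmax_right in hb by lra. eexists. apply Dh. apply HcdS; auto.
  + intros b hb. rewrite Rmin_left, Rmax_right in hb by lra.
    assert (Sb : S b) by (apply HcdS; lra).
    apply continuous_ext_loc with (g := fun y => RInt (fun a => dB t a y) lo hi).
    * destruct (HS b Sb) as [e He]. exists e. intros z hz. symmetry.
      apply is_derive_unique. apply Dh. apply He. exact hz.
    * apply (c2d_y (fun _ y => RInt (fun a => dB t a y) lo hi) t b).
      apply (Kint (fun _ y a => dB t a y) t b lo hi S); auto.
      intros x y a Sy _. intros eps. destruct (HdB t a y Sy eps) as [dd Hdd]. exists dd.
      intros x' y' z' h1 h2 h3. apply Hdd; auto. rewrite Rminus_eq_0, Rabs_R0; apply cond_pos.
Qed.

Definition VO (u v : R->R->R->R) t a b :=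
  / cos b * (d_phi v t a b - (d_theta u t a b * cos b - u t a b * sin b)).
Definition OS (Psi : R->R) b := / cos b * (Derive (Derive Psi) b * cos b - Derive Psi b * sin b).

Lemma vort_eq u v : smooth3 u -> vorticity u v = VO u v.
Proof.
intros Hu. apply functional_extensionality; intro t.
apply functional_extensionality; intro a. apply functional_extensionality; intro b.
unfold vorticity, VO. f_equal. f_equal.
rewrite Derive_mult. rewrite (is_derive_unique cos b (- sin b)) by apply is_derive_cos.
unfold d_theta. change (Derive (u t a) b) with (Derive (fun s => u t a s) b). ring.
apply (sm_ex u Hu). eexists; apply is_derive_cos.
Qed.

Lemma OS_eq Psi : (forall x, ex_derive Psi x) -> (forall x, ex_derive (Derive Psi) x) -> Omegastar Psi = OS Psi.
Proof.
intros H1 H2. apply functional_extensionality; intro b.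
unfold Omegastar, OS, ustar. f_equal.
rewrite Derive_mult. rewrite Derive_opp. rewrite (is_derive_unique cos b (- sin b)) by apply is_derive_cos.
ring.
auto_derive. apply H2. eexists; apply is_derive_cos.
Qed.

Definition f1 (u v : R->R->R->R) Psi t a b := ((u t a b - ustar Psi b)^2 + v t a b ^2) * cos b.
Definition f2 (u v : R->R->R->R) Psi t a b := (VO u v t a b - OS Psi b)^2 * cos b.
Definition df1 (u v : R->R->R->R) Psi t a b :=
  (2*(u t a b - ustar Psi b)*d_t u t a b + 2*v t a b*d_t v t a b)*cos b.
Definition VOt (u v : R->R->R->R) t a b :=
  / cos b * (d_t (d_phi v) t a b - (d_t (d_theta u) t a b * cos b - d_t u t a b * sin b)).
Definition df2 (u v : R->R->R->R) Psi t a b := 2*(VO u v t a b - OS Psi b)*VOt u v t a b * cos b.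

Lemma ex_t f : smooth3 f -> forall t a b, ex_derive (fun s => f s a b) t.
Proof. intros H t a b. destruct (sm_ex f H t a b) as [h1 [h2 h3]]; exact h1. Qed.
Lemma ex_p f : smooth3 f -> forall t a b, ex_derive (fun s => f t s b) a.
Proof. intros H t a b. destruct (sm_ex f H t a b) as [h1 [h2 h3]]; exact h2. Qed.
Lemma ex_h f : smooth3 f -> forall t a b, ex_derive (fun s => f t a s) b.
Proof. intros H t a b. destruct (sm_ex f H t a b) as [h1 [h2 h3]]; exact h3. Qed.

Lemma d_f1 u v Psi t a b : smooth3 u -> smooth3 v ->
  is_derive (fun s => f1 u v Psi s a b) t (df1 u v Psi t a b).
Proof.
intros Hu Hv. unfold f1, df1, d_t. auto_derive.
split. exact (ex_t u Hu t a b). split. exact (ex_t v Hv t a b). exact I.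
ring.
Qed.
Lemma d_f2 u v Psi t a b : smooth3 u -> smooth3 v ->
  is_derive (fun s => f2 u v Psi s a b) t (df2 u v Psi t a b).
Proof.
intros Hu Hv.
assert (E1 := ex_t _ (sm_phi v Hv)). assert (E2 := ex_t _ (sm_th u Hu)). assert (E3 := ex_t u Hu).
unfold f2, df2, VO, VOt. revert E1 E2.
generalize (d_phi v) (d_theta u). intros V1 U1 E1 E2.
unfold d_t. auto_derive.
repeat split; auto.
ring.
Qed.

Definition Bern (u v p : R->R->R->R) t a b := p t a b + (u t a b ^2 + v t a b ^2)/2.
Definition WW (u v : R->R->R->R) Psi t a b := VO u v t a b - OS Psi b.
Definition HH lam Ups (Psi : R -> R) b := lam*Psi b*Psi b/2 - Ups*Psi b.
Definition AA lam Ups Psi (u v p : R->R->R->R) t a b :=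
  2*lam*u t a b*Bern u v p t a b - 2*lam*ustar Psi b*Bern u v p t a b
  - u t a b*(WW u v Psi t a b)^2 + 2*lam*u t a b*HH lam Ups Psi b.
Definition BB lam Ups Psi (u v p : R->R->R->R) t a b :=
  2*lam*v t a b*cos b*Bern u v p t a b - v t a b*cos b*(WW u v Psi t a b)^2
  + 2*lam*v t a b*cos b*HH lam Ups Psi b.
Definition dAA lam Ups Psi (u v p : R->R->R->R) t a b :=
  let Ba := d_phi p t a b + u t a b*d_phi u t a b + v t a b*d_phi v t a b in
  let Wa := /cos b*(d_phi (d_phi v) t a b - (d_phi (d_theta u) t a b*cos b - d_phi u t a b*sin b)) in
  2*lam*(d_phi u t a b*Bern u v p t a b + u t a b*Ba) - 2*lam*ustar Psi b*Ba
  - d_phi u t a b*(WW u v Psi t a b)^2 - 2*u t a b*WW u v Psi t a b*Wa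
  + 2*lam*d_phi u t a b*HH lam Ups Psi b.
Definition VOb (u v : R->R->R->R) t a b :=
  sin b/(cos b)^2 * (d_phi v t a b - (d_theta u t a b * cos b - u t a b * sin b))
  + /cos b * (d_theta (d_phi v) t a b - (d_theta (d_theta u) t a b * cos b - d_theta u t a b * sin b
               - (d_theta u t a b * sin b + u t a b * cos b))).
Definition OSb (Psi : R -> R) b :=
  sin b/(cos b)^2 * (Derive (Derive Psi) b * cos b - Derive Psi b * sin b)
  + /cos b * (Derive (Derive (Derive Psi)) b * cos b - Derive (Derive Psi) b * sin b
              - (Derive (Derive Psi) b * sin b + Derive Psi b * cos b)).
Definition dBB lam Ups Psi (u v p : R->R->R->R) t a b :=
  let Bb := d_theta p t a b + u t a b*d_theta u t a b + v t a b*d_theta v t a b in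
  let Hb := lam*Psi b*Derive Psi b - Ups*Derive Psi b in
  let Wb := VOb u v t a b - OSb Psi b in
  let dvc := d_theta v t a b*cos b - v t a b*sin b in
  2*lam*(dvc*Bern u v p t a b + v t a b*cos b*Bb) - dvc*(WW u v Psi t a b)^2
  - 2*v t a b*cos b*WW u v Psi t a b*Wb + 2*lam*(dvc*HH lam Ups Psi b + v t a b*cos b*Hb).

Lemma d_AA lam Ups Psi u v p t a b : smooth3 u -> smooth3 v -> smooth3 p -> cos b <> 0 ->
  is_derive (fun s => AA lam Ups Psi u v p t s b) a (dAA lam Ups Psi u v p t a b).
Proof.
intros Hu Hv Hp Hc.
assert (E1 := ex_p _ (sm_phi v Hv)). assert (E2 := ex_p _ (sm_th u Hu)).
assert (E3 := ex_p u Hu). assert (E4 := ex_p v Hv). assert (E5 := ex_p p Hp).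
unfold AA, dAA, Bern, WW, VO. revert E1 E2.
remember (d_phi v) as V1 eqn:HV1. remember (d_theta u) as U1 eqn:HU1. intros E1 E2.
auto_derive. repeat split; auto.
subst V1 U1. unfold d_phi, d_theta. field. exact Hc.
Qed.

Lemma d_BB lam Ups Psi u v p t a b : smooth3 u -> smooth3 v -> smooth3 p -> smooth1 Psi -> cos b <> 0 ->
  is_derive (fun s => BB lam Ups Psi u v p t a s) b (dBB lam Ups Psi u v p t a b).
Proof.
intros Hu Hv Hp HPsi Hc.
destruct HPsi as [P0 HP1]. destruct HP1 as [P1 HP2]. destruct HP2 as [P2 HP3]. destruct HP3 as [P3 _].
assert (E1 := ex_h _ (sm_phi v Hv)). assert (E2 := ex_h _ (sm_th u Hu)).
assert (E3 := ex_h u Hu). assert (E4 := ex_h v Hv). assert (E5 := ex_h p Hp).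
unfold BB, dBB, Bern, WW, VO, OS, VOb, OSb, HH. revert E1 E2.
remember (d_phi v) as V1 eqn:HV1. remember (d_theta u) as U1 eqn:HU1. intros E1 E2.
revert P1 P2 P3.
remember (Derive (Derive (Derive Psi))) as D3 eqn:HD3.
remember (Derive (Derive Psi)) as D2 eqn:HD2.
remember (Derive Psi) as D1 eqn:HD1. intros P1 P2 P3.
auto_derive. repeat split; auto.
subst V1 U1 D3 D2 D1. unfold d_phi, d_theta. change (Derive (fun x : R => Psi x) b) with (Derive Psi b) in *. change (Derive (fun x : R => Derive Psi x) b) with (Derive (Derive Psi) b) in *. change (Derive (fun x : R => Derive (Derive Psi) x) b) with (Derive (Derive (Derive Psi)) b) in *. field. exact Hc.
Qed.

Lemma sm1_D Psi : smooth1 Psi -> (forall x, ex_derive Psi x) /\ (forall x, ex_derive (Derive Psi) x) /\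
  (forall x, ex_derive (Derive (Derive Psi)) x) /\ (forall x, ex_derive (Derive (Derive (Derive Psi))) x).
Proof.
intros H. destruct H as [P0 H]. destruct H as [P1 H]. destruct H as [P2 H]. destruct H as [P3 H].
auto.
Qed.

Lemma C3_atom (h : R -> R) x y z : (forall w, ex_derive h w) -> C3 (fun _ _ b => h b) x y z.
Proof. intros H. apply C3_fun3. exact (ex_derive_continuous h z (H z)). Qed.

Lemma C3_cos x y z : C3 (fun _ _ b => cos b) x y z.
Proof. apply C3_atom. intros w; eexists; apply is_derive_cos. Qed.
Lemma C3_sin x y z : C3 (fun _ _ b => sin b) x y z.
Proof. apply C3_atom. intros w; eexists; apply is_derive_sin. Qed.

Ltac sm := match goal with
 | |- smooth3 (d_t ?f) => apply sm_t; sm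
 | |- smooth3 (d_phi ?f) => apply sm_phi; sm
 | |- smooth3 (d_theta ?f) => apply sm_th; sm
 | |- smooth3 ?f => assumption end.
Ltac c3step :=
  match goal with
  | |- C3 (fun t a b => ?c) _ _ _ => apply C3_const
  | |- C3 (fun t a b => @?F t a b + @?G t a b) _ _ _ => apply (C3_plus F G)
  | |- C3 (fun t a b => @?F t a b - @?G t a b) _ _ _ => apply (C3_minus F G)
  | |- C3 (fun t a b => @?F t a b * @?G t a b) _ _ _ => apply (C3_mult F G)
  | |- C3 (fun t a b => - @?F t a b) _ _ _ => apply (C3_opp F)
  | |- C3 (fun t a b => @?F t a b ^ ?n) _ _ _ => apply (C3_pow F n)
  | |- C3 (fun t a b => / @?F t a b) _ _ _ => apply (C3_inv F); [| try apply pow_nonzero; assumption]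
  | |- C3 (fun t a b => cos b) _ _ _ => apply C3_cos
  | |- C3 (fun t a b => sin b) _ _ _ => apply C3_sin
  | |- C3 (fun t a b => ?h b) _ _ _ => apply (C3_atom h); assumption
  | |- C3 (fun t a b => ?f t a b) _ _ _ => apply (sm_C3 f); sm
  end.
Ltac c3 HPsi :=
  let H0 := fresh in let H1 := fresh in let H2 := fresh in let H3 := fresh in
  destruct (sm1_D _ HPsi) as [H0 [H1 [H2 H3]]];
  repeat c3step.

Definition SS b := - PI / 2 < b < PI / 2.

Lemma SS_cos b : SS b -> cos b <> 0.
Proof. intros [h1 h2]. apply Rgt_not_eq. apply cos_gt_0; lra. Qed.

Lemma SS_open : openS SS.
Proof.
intros y [h1 h2].
assert (Hd : 0 < Rmin (y + PI/2) (PI/2 - y)) by (apply Rmin_pos; lra).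
exists (mkposreal _ Hd). intros y' hy'. simpl in hy'.
assert (A1 := Rmin_l (y + PI/2) (PI/2 - y)). assert (A2 := Rmin_r (y + PI/2) (PI/2 - y)).
apply Rabs_def2 in hy'. split; lra.
Qed.

Lemma cont_f1 u v Psi t a b : smooth3 u -> smooth3 v -> smooth1 Psi -> SS b -> cont3 (f1 u v Psi) t a b.
Proof.
intros Hu Hv HPsi Sb. assert (Hc := SS_cos b Sb). apply C3_cont3. unfold f1, ustar. unfold Rdiv. cbv zeta. c3 HPsi.
Qed.
Lemma cont_f2 u v Psi t a b : smooth3 u -> smooth3 v -> smooth1 Psi -> SS b -> cont3 (f2 u v Psi) t a b.
Proof.
intros Hu Hv HPsi Sb. assert (Hc := SS_cos b Sb). apply C3_cont3. unfold f2, VO, OS. unfold Rdiv. cbv zeta. c3 HPsi.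
Qed.
Lemma cont_df1 u v Psi t a b : smooth3 u -> smooth3 v -> smooth1 Psi -> SS b -> cont3 (df1 u v Psi) t a b.
Proof.
intros Hu Hv HPsi Sb. assert (Hc := SS_cos b Sb). apply C3_cont3. unfold df1, ustar. unfold Rdiv. cbv zeta. c3 HPsi.
Qed.
Lemma cont_df2 u v Psi t a b : smooth3 u -> smooth3 v -> smooth1 Psi -> SS b -> cont3 (df2 u v Psi) t a b.
Proof.
intros Hu Hv HPsi Sb. assert (Hc := SS_cos b Sb). apply C3_cont3. unfold df2, VO, VOt, OS. unfold Rdiv. cbv zeta. c3 HPsi.
Qed.
Lemma cont_dAA lam Ups Psi u v p t a b : smooth3 u -> smooth3 v -> smooth3 p -> smooth1 Psi -> SS b ->
  cont3 (dAA lam Ups Psi u v p) t a b.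
Proof.
intros Hu Hv Hp HPsi Sb. assert (Hc := SS_cos b Sb). apply C3_cont3.
unfold dAA, Bern, WW, VO, OS, HH, ustar. unfold Rdiv. cbv zeta. c3 HPsi.
Qed.
Lemma cont_BB lam Ups Psi u v p t a b : smooth3 u -> smooth3 v -> smooth3 p -> smooth1 Psi -> SS b ->
  cont3 (BB lam Ups Psi u v p) t a b.
Proof.
intros Hu Hv Hp HPsi Sb. assert (Hc := SS_cos b Sb). apply C3_cont3.
unfold BB, Bern, WW, VO, OS, HH, ustar. unfold Rdiv. cbv zeta. c3 HPsi.
Qed.
Lemma cont_dBB lam Ups Psi u v p t a b : smooth3 u -> smooth3 v -> smooth3 p -> smooth1 Psi -> SS b ->
  cont3 (dBB lam Ups Psi u v p) t a b.
Proof.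
intros Hu Hv Hp HPsi Sb. assert (Hc := SS_cos b Sb). apply C3_cont3.
unfold dBB, Bern, WW, VO, OS, HH, VOb, OSb, ustar. unfold Rdiv. cbv zeta. c3 HPsi.
Qed.

Lemma cont3_2d23 F x y z : cont3 F x y z -> continuity_2d_pt (fun u v => F x u v) y z.
Proof.
intros H eps. destruct (H eps) as [d Hd]. exists d. intros u v hu hv. apply Hd; auto.
rewrite Rminus_eq_0, Rabs_R0; apply cond_pos.
Qed.
Lemma cont3_2d13 F x y z : cont3 F x y z -> continuity_2d_pt (fun u v => F u y v) x z.
Proof.
intros H eps. destruct (H eps) as [d Hd]. exists d. intros u v hu hv. apply Hd; auto.
rewrite Rminus_eq_0, Rabs_R0; apply cond_pos.
Qed.

Lemma sm_cont3 f : smooth3 f -> forall t a b, cont3 f t a b.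
Proof. intros H t a b. apply C3_cont3. apply sm_C3. exact H. Qed.

Lemma sw_pt f : smooth3 f -> forall t a b, d_phi (d_theta f) t a b = d_theta (d_phi f) t a b.
Proof.
intros Hf t a b. unfold d_phi, d_theta.
apply (Schwarz (fun z w => f t z w) a b).
- exists (mkposreal 1 Rlt_0_1). intros x y _ _. split; [|split; [|split]].
  + exact (ex_p f Hf t x y).
  + exact (ex_h f Hf t x y).
  + exact (ex_p _ (sm_th f Hf) t x y).
  + exact (ex_h _ (sm_phi f Hf) t x y).
- exact (cont3_2d23 _ t a b (sm_cont3 _ (sm_phi _ (sm_th f Hf)) t a b)).
- exact (cont3_2d23 _ t a b (sm_cont3 _ (sm_th _ (sm_phi f Hf)) t a b)).
Qed.

Lemma sw_tp f : smooth3 f -> forall t a b, d_t (d_phi f) t a b = d_phi (d_t f) t a b.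
Proof.
intros Hf t a b. unfold d_phi, d_t.
apply (Schwarz (fun z w => f z w b) t a).
- exists (mkposreal 1 Rlt_0_1). intros x y _ _. split; [|split; [|split]].
  + exact (ex_t f Hf x y b).
  + exact (ex_p f Hf x y b).
  + exact (ex_t _ (sm_phi f Hf) x y b).
  + exact (ex_p _ (sm_t f Hf) x y b).
- exact (cont3_2d12 _ t a b (sm_cont3 _ (sm_t _ (sm_phi f Hf)) t a b)).
- exact (cont3_2d12 _ t a b (sm_cont3 _ (sm_phi _ (sm_t f Hf)) t a b)).
Qed.

Lemma sw_th f : smooth3 f -> forall t a b, d_t (d_theta f) t a b = d_theta (d_t f) t a b.
Proof.
intros Hf t a b. unfold d_theta, d_t.
apply (Schwarz (fun z w => f z a w) t b).
- exists (mkposreal 1 Rlt_0_1). intros x y _ _. split; [|split; [|split]].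
  + exact (ex_t f Hf x a y).
  + exact (ex_h f Hf x a y).
  + exact (ex_t _ (sm_th f Hf) x a y).
  + exact (ex_h _ (sm_t f Hf) x a y).
- exact (cont3_2d13 _ t a b (sm_cont3 _ (sm_t _ (sm_th f Hf)) t a b)).
- exact (cont3_2d13 _ t a b (sm_cont3 _ (sm_th _ (sm_t f Hf)) t a b)).
Qed.

Lemma per_phi f : periodic_phi f -> smooth3 f -> forall t a b, d_phi f t (a + 2*PI) b = d_phi f t a b.
Proof.
intros Hper Hf t a b. unfold d_phi.
symmetry.
rewrite (Derive_ext (fun s => f t s b) (fun s => f t (s + 2*PI) b)) by (intros; symmetry; apply Hper).
apply is_derive_unique.
destruct (ex_p f Hf t (a + 2*PI) b) as [l Hl].
replace (Derive (fun s => f t s b) (a + 2*PI)) with l by (symmetry; apply is_derive_unique; exact Hl).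
assert (Hg : is_derive (fun s : R => s + 2*PI) a 1) by (auto_derive; auto; ring).
assert (K := is_derive_comp (fun s => f t s b) (fun s => s + 2*PI) a l 1 Hl Hg).
replace l with (scal 1 l). exact K. unfold scal; simpl; unfold mult; simpl; ring.
Qed.

Lemma per_th f : periodic_phi f -> forall t a b, d_theta f t (a + 2*PI) b = d_theta f t a b.
Proof.
intros Hper t a b. unfold d_theta. apply Derive_ext. intros; apply Hper.
Qed.

Lemma d_OS Psi b : smooth1 Psi -> cos b <> 0 -> is_derive (OS Psi) b (OSb Psi b).
Proof.
intros HPsi Hc. destruct (sm1_D _ HPsi) as [P0 [P1 [P2 P3]]].
unfold OS, OSb. revert P1 P2 P3.
remember (Derive (Derive (Derive Psi))) as D3 eqn:HD3.
remember (Derive (Derive Psi)) as D2 eqn:HD2.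
remember (Derive Psi) as D1 eqn:HD1. intros P1 P2 P3.
auto_derive. repeat split; auto.
subst D3 D2 D1.
change (Derive (fun x : R => Derive Psi x) b) with (Derive (Derive Psi) b) in *.
change (Derive (fun x : R => Derive (Derive Psi) x) b) with (Derive (Derive (Derive Psi)) b) in *.
field. exact Hc.
Qed.

Lemma in_SS th1 th2 b : - PI / 2 < th1 -> th2 < 0 -> th1 <= b <= th2 -> SS b.
Proof. intros h1 h2 hb. unfold SS. assert (PI > 0) by apply PI_RGT_0. lra. Qed.

Lemma OS_val omega lam Ups th1 th2 psi1 psi2 Psi s :
  Psi_solves omega lam Ups th1 th2 psi1 psi2 Psi -> th1 < s < th2 -> cos s <> 0 ->
  OS Psi s = -lam*Psi s + Ups - 2*omega*sin s.
Proof.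
intros [HPsi [HODE _]] hs Hc.
destruct (sm1_D _ HPsi) as [P0 [P1 [P2 P3]]].
assert (HO := HODE s hs).
rewrite Derive_mult in HO by (auto; eexists; apply is_derive_cos).
rewrite (is_derive_unique cos s (- sin s)) in HO by apply is_derive_cos.
rewrite sin_2a in HO.
unfold OS.
change (Derive (fun x => Derive Psi x) s) with (Derive (Derive Psi) s) in HO.
replace (Derive (Derive Psi) s * cos s - Derive Psi s * sin s)
  with (- lam * Psi s * cos s + Ups * cos s - omega * (2 * sin s * cos s)) by (rewrite <- HO; ring).
field. exact Hc.
Qed.

Lemma OSb_val omega lam Ups th1 th2 psi1 psi2 Psi b :
  Psi_solves omega lam Ups th1 th2 psi1 psi2 Psi -> - PI / 2 < th1 -> th2 < 0 -> th1 < b < th2 ->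
  OSb Psi b = -lam*Derive Psi b - 2*omega*cos b.
Proof.
intros HS h1 h2 hb.
assert (HPsi : smooth1 Psi) by apply HS.
destruct (sm1_D _ HPsi) as [P0 [P1 [P2 P3]]].
assert (Hc : cos b <> 0) by (apply SS_cos; apply (in_SS th1 th2); lra).
assert (D1 := d_OS Psi b HPsi Hc).
assert (D2 : is_derive (fun s => -lam*Psi s + Ups - 2*omega*sin s) b (-lam*Derive Psi b - 2*omega*cos b)).
{ auto_derive. auto. change (Derive (fun x => Psi x) b) with (Derive Psi b). ring. }
apply is_derive_ext_loc with (g := OS Psi) in D2.
- rewrite <- (is_derive_unique _ _ _ D1). exact (is_derive_unique _ _ _ D2).
- assert (He : 0 < Rmin (b - th1) (th2 - b)) by (apply Rmin_pos; lra).
  exists (mkposreal _ He). intros s hs. change (Rabs (s - b) < Rmin (b - th1) (th2 - b)) in hs.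
  assert (A1 := Rmin_l (b - th1) (th2 - b)). assert (A2 := Rmin_r (b - th1) (th2 - b)).
  apply Rabs_def2 in hs.
  symmetry. apply (OS_val omega lam Ups th1 th2 psi1 psi2); auto. lra.
  apply SS_cos; apply (in_SS th1 th2); lra.
Qed.

Lemma pointwise omega th1 th2 psi1 psi2 lam Ups Psi u v p t a b :
  Psi_solves omega lam Ups th1 th2 psi1 psi2 Psi ->
  euler_solution omega th1 th2 u v p ->
  - PI / 2 < th1 -> th2 < 0 ->
  0 <= t -> th1 < b < th2 ->
  -lam * df1 u v Psi t a b + df2 u v Psi t a b
  = dAA lam Ups Psi u v p t a b + dBB lam Ups Psi u v p t a b.
Proof.
intros HS HE h1 h2 ht hb.
assert (Hc : cos b <> 0) by (apply SS_cos; apply (in_SS th1 th2); lra).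
assert (EOS := OS_val omega lam Ups th1 th2 psi1 psi2 Psi b HS hb Hc).
assert (EOSb := OSb_val omega lam Ups th1 th2 psi1 psi2 Psi b HS h1 h2 hb).
destruct HE as [Hu [Hv [Hp [Pu [Pv [Pp [M1 [M2 [Dv Bd]]]]]]]]].
assert (Eut : d_t u t a b = - d_phi p t a b / cos b - (u t a b * d_phi u t a b / cos b
   + v t a b * d_theta u t a b - u t a b * v t a b * (sin b / cos b) - 2*omega*v t a b*sin b)).
{ assert (H := M1 t a b ht hb). unfold tan in H. lra. }
assert (Evt : d_t v t a b = - d_theta p t a b - (u t a b * d_phi v t a b / cos b
   + v t a b * d_theta v t a b + u t a b * u t a b * (sin b / cos b) + 2*omega*u t a b*sin b)).
{ assert (H := M2 t a b ht hb). unfold tan in H. simpl in H. lra. }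
assert (Ediv : d_phi u t a b = - (d_theta v t a b * cos b - v t a b * sin b)).
{ assert (H := Dv t a b ht hb).
  rewrite Derive_mult in H; [| apply (ex_h v Hv) | eexists; apply is_derive_cos].
  rewrite (is_derive_unique cos b (- sin b)) in H by apply is_derive_cos.
  change (Derive (v t a) b) with (d_theta v t a b) in H. lra. }
assert (Evta : d_t (d_phi v) t a b = - d_phi (d_theta p) t a b
   - ((d_phi u t a b * d_phi v t a b + u t a b * d_phi (d_phi v) t a b)/cos b
      + d_phi v t a b * d_theta v t a b + v t a b * d_theta (d_phi v) t a b
      + 2*u t a b*d_phi u t a b*(sin b/cos b) + 2*omega*d_phi u t a b*sin b)).
{ rewrite (sw_tp v Hv). rewrite <- (sw_pt v Hv).
  unfold d_phi at 1.
  rewrite (Derive_ext (fun s => d_t v t s b) (fun s => - d_theta p t s b - (u t s b * d_phi v t s b / cos b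
     + v t s b * d_theta v t s b + u t s b * u t s b * (sin b / cos b) + 2*omega*u t s b*sin b))).
  2:{ intros s. assert (H := M2 t s b ht hb). unfold tan in H. simpl in H. lra. }
  assert (E1 := ex_p _ (sm_phi v Hv)). assert (E2 := ex_p _ (sm_th v Hv)).
  assert (E3 := ex_p u Hu). assert (E4 := ex_p v Hv). assert (E5 := ex_p _ (sm_th p Hp)).
  revert E1 E2 E5.
  remember (d_phi v) as V1 eqn:HV1. remember (d_theta v) as V2 eqn:HV2.
  remember (d_theta p) as Q2 eqn:HQ2. intros E1 E2 E5.
  apply is_derive_unique. auto_derive. repeat split; auto.
  subst V1 V2 Q2. unfold d_phi. field. exact Hc. }
assert (Eutb : d_t (d_theta u) t a b = -(d_phi (d_theta p) t a b / cos b + d_phi p t a b * sin b/(cos b*cos b))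
   - ((d_theta u t a b * d_phi u t a b + u t a b * d_phi (d_theta u) t a b)/cos b
      + u t a b*d_phi u t a b*sin b/(cos b*cos b) + d_theta v t a b*d_theta u t a b
      + v t a b*d_theta (d_theta u) t a b
      - (d_theta u t a b*v t a b + u t a b*d_theta v t a b)*(sin b/cos b)
      - u t a b*v t a b*(sin b*sin b+cos b*cos b)/(cos b*cos b)
      - 2*omega*(d_theta v t a b*sin b + v t a b*cos b))).
{ rewrite (sw_th u Hu). rewrite (sw_pt u Hu). rewrite (sw_pt p Hp).
  unfold d_theta at 1.
  rewrite (Derive_ext_loc (fun s => d_t u t a s) (fun s => - d_phi p t a s / cos s - (u t a s * d_phi u t a s / cos s
   + v t a s * d_theta u t a s - u t a s * v t a s * (sin s / cos s) - 2*omega*v t a s*sin s))).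
  2:{ assert (He : 0 < Rmin (b - th1) (th2 - b)) by (apply Rmin_pos; lra).
      exists (mkposreal _ He). intros s hs. change (Rabs (s - b) < Rmin (b - th1) (th2 - b)) in hs.
      assert (A1 := Rmin_l (b - th1) (th2 - b)). assert (A2 := Rmin_r (b - th1) (th2 - b)).
      apply Rabs_def2 in hs.
      assert (H := M1 t a s ht ltac:(lra)). unfold tan in H. lra. }
  assert (E1 := ex_h _ (sm_phi u Hu)). assert (E2 := ex_h _ (sm_th u Hu)).
  assert (E3 := ex_h u Hu). assert (E4 := ex_h v Hv). assert (E5 := ex_h _ (sm_phi p Hp)).
  revert E1 E2 E5.
  remember (d_phi u) as U1 eqn:HU1. remember (d_theta u) as U2 eqn:HU2.
  remember (d_phi p) as Q1 eqn:HQ1. intros E1 E2 E5.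
  apply is_derive_unique. auto_derive. repeat split; auto.
  subst U1 U2 Q1. unfold d_theta. field. exact Hc. }
unfold df1, df2, dAA, dBB, VOt, WW, VO, Bern, HH, ustar, VOb. cbv zeta.
rewrite EOS, EOSb.
rewrite Evta, Eutb, Eut, Evt. rewrite Ediv.
field. exact Hc.
Qed.

Lemma inner_ex (F : R->R->R->R) t b lo hi : (forall a, cont3 F t a b) -> ex_RInt (fun a => F t a b) lo hi.
Proof.
intros H. apply (ex_RInt_continuous (V := R_CompleteNormedModule)). intros z _.
apply (cont3_y F t z b). apply H.
Qed.

Lemma outer_ex (F : R->R->R->R) t lo hi c d (S : R -> Prop) :
  lo <= hi -> openS S -> (forall b, Rmin c d <= b <= Rmax c d -> S b) ->
  (forall x a b, S b -> cont3 F x a b) ->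
  ex_RInt (fun b => RInt (fun a => F t a b) lo hi) c d.
Proof.
intros Hlh HS HcdS Hc. apply (ex_RInt_continuous (V := R_CompleteNormedModule)). intros z hz.
apply (c2d_y (fun x y => RInt (fun a => F x a y) lo hi) t z).
apply (Kint (fun x y a => F x a y) t z lo hi S); auto.
intros; apply (cont3_perm F); apply Hc; auto.
Qed.

Lemma dbl_lin (F G : R->R->R->R) k t lo hi c d (S : R -> Prop) :
  lo <= hi -> c <= d -> openS S -> (forall b, c <= b <= d -> S b) ->
  (forall x a b, S b -> cont3 F x a b) -> (forall x a b, S b -> cont3 G x a b) ->
  RInt (fun b => RInt (fun a => k * F t a b + G t a b) lo hi) c d
  = k * RInt (fun b => RInt (fun a => F t a b) lo hi) c d + RInt (fun b => RInt (fun a => G t a b) lo hi) c d.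
Proof.
intros Hlh Hcd HS HcdS HF HG.
rewrite (RInt_ext _ (fun b => k * RInt (fun a => F t a b) lo hi + RInt (fun a => G t a b) lo hi)).
2:{ intros b hb. rewrite Rmin_left, Rmax_right in hb by lra.
    assert (Sb : S b) by (apply HcdS; lra).
    assert (E1 := inner_ex F t b lo hi (fun a => HF t a b Sb)).
    assert (E2 := inner_ex G t b lo hi (fun a => HG t a b Sb)).
    assert (E3 : ex_RInt (fun a => k * F t a b) lo hi) by (apply (ex_RInt_scal (V := R_CompleteNormedModule) _ _ _ k E1)).
    assert (Hp : RInt (fun a => k * F t a b + G t a b) lo hi = RInt (fun a => k * F t a b) lo hi + RInt (fun a => G t a b) lo hi)
      by exact (RInt_plus (V := R_CompleteNormedModule) _ _ _ _ E3 E2).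
    rewrite Hp. f_equal.
    exact (RInt_scal (V := R_CompleteNormedModule) _ _ _ k E1). }
assert (HS' : forall b, Rmin c d <= b <= Rmax c d -> S b) by (intros b hb; rewrite Rmin_left, Rmax_right in hb by lra; auto).
assert (E1 := outer_ex F t lo hi c d S Hlh HS HS' HF).
assert (E2 := outer_ex G t lo hi c d S Hlh HS HS' HG).
assert (E3 : ex_RInt (fun b => k * RInt (fun a => F t a b) lo hi) c d) by (apply (ex_RInt_scal (V := R_CompleteNormedModule) _ _ _ k E1)).
assert (Hp : RInt (fun b => k * RInt (fun a => F t a b) lo hi + RInt (fun a => G t a b) lo hi) c d
   = RInt (fun b => k * RInt (fun a => F t a b) lo hi) c d + RInt (fun b => RInt (fun a => G t a b) lo hi) c d)
  by exact (RInt_plus (V := R_CompleteNormedModule) _ _ _ _ E3 E2).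
rewrite Hp. f_equal.
exact (RInt_scal (V := R_CompleteNormedModule) _ _ _ k E1).
Qed.

Theorem theorem3p2 (omega th1 th2 psi1 psi2 lam Ups : R) (Psi : R -> R)
  (u v p : R -> R -> R -> R) :
  0 < omega ->
  - PI / 2 < th1 -> th1 < th2 -> th2 < 0 ->
  psi1 <> psi2 ->
  lam <= 0 ->
  Psi_solves omega lam Ups th1 th2 psi1 psi2 Psi ->
  euler_solution omega th1 th2 u v p ->
  forall t, 0 <= t ->
    energy lam th1 th2 Psi u v t = energy lam th1 th2 Psi u v 0.
Proof.
intros Hom h1 h12 h2 _ _ HS HE t Ht.
assert (HPsi : smooth1 Psi) by apply HS.
destruct (sm1_D _ HPsi) as [P0 [P1 [P2 P3]]].
assert (HE' := HE).
destruct HE' as [Hu [Hv [Hp [Pu [Pv [Pp [M1 [M2 [Dv Bd]]]]]]]]].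
assert (HPI : 0 < PI) by apply PI_RGT_0.
assert (H2PI : 0 <= 2 * PI) by lra.
assert (HSS : forall b, th1 <= b <= th2 -> SS b) by (intros; apply (in_SS th1 th2); lra).
set (I1 := fun s => RInt (fun b => RInt (fun a => f1 u v Psi s a b) 0 (2*PI)) th1 th2).
set (I2 := fun s => RInt (fun b => RInt (fun a => f2 u v Psi s a b) 0 (2*PI)) th1 th2).
assert (Een : forall s, energy lam th1 th2 Psi u v s = -lam * I1 s + I2 s).
{ intros s. unfold energy, int_C. rewrite (vort_eq u v Hu), (OS_eq Psi P0 P1). reflexivity. }
set (J1 := fun s => RInt (fun b => RInt (fun a => df1 u v Psi s a b) 0 (2*PI)) th1 th2).
set (J2 := fun s => RInt (fun b => RInt (fun a => df2 u v Psi s a b) 0 (2*PI)) th1 th2).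
assert (D1 : forall s, is_derive I1 s (J1 s)).
{ intros s. apply (dbl_deriv (f1 u v Psi) (df1 u v Psi) 0 (2*PI) th1 th2 SS s); auto.
  lra. apply SS_open.
  intros; apply cont_f1; auto. intros; apply d_f1; auto. intros; apply cont_df1; auto. }
assert (D2 : forall s, is_derive I2 s (J2 s)).
{ intros s. apply (dbl_deriv (f2 u v Psi) (df2 u v Psi) 0 (2*PI) th1 th2 SS s); auto.
  lra. apply SS_open.
  intros; apply cont_f2; auto. intros; apply d_f2; auto. intros; apply cont_df2; auto. }
assert (DE : forall s, is_derive (fun s => -lam * I1 s + I2 s) s (-lam * J1 s + J2 s)).
{ intros s. auto_derive. split; [eexists; apply D1 | split; [eexists; apply D2 | exact I]].
  change (Derive (fun x : R => I1 x) s) with (Derive I1 s). change (Derive (fun x : R => I2 x) s) with (Derive I2 s). rewrite (is_derive_unique _ _ _ (D1 s)), (is_derive_unique _ _ _ (D2 s)). ring. }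
assert (Z : forall s, 0 <= s -> -lam * J1 s + J2 s = 0).
{ intros s hs. unfold J1, J2.
  rewrite <- (dbl_lin (df1 u v Psi) (df2 u v Psi) (-lam) s 0 (2*PI) th1 th2 SS); auto; try lra.
  2: apply SS_open.
  2: intros; apply cont_df1; auto.
  2: intros; apply cont_df2; auto.
  rewrite (RInt_ext _ (fun b => RInt (fun a => dAA lam Ups Psi u v p s a b + dBB lam Ups Psi u v p s a b) 0 (2*PI))).
  2:{ intros b hb. rewrite Rmin_left, Rmax_right in hb by lra.
      apply RInt_ext. intros a _.
      apply (pointwise omega th1 th2 psi1 psi2); auto. }
  apply (flux_zero (AA lam Ups Psi u v p) (BB lam Ups Psi u v p) (dAA lam Ups Psi u v p) (dBB lam Ups Psi u v p)
          s 0 (2*PI) th1 th2 SS); auto; try lra.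
  - apply SS_open.
  - intros a b Sb. apply d_AA; auto. apply SS_cos; auto.
  - intros a b Sb. apply cont_dAA; auto.
  - intros b hb. unfold AA, Bern, WW, VO.
    replace (2*PI) with (0 + 2*PI) by ring.
    rewrite !Pu, !Pv, !Pp, (per_phi v Pv Hv), (per_th u Pu). reflexivity.
  - intros a b Sb. apply d_BB; auto. apply SS_cos; auto.
  - intros x a b Sb. apply cont_BB; auto.
  - intros x a b Sb. apply cont_dBB; auto.
  - intros a. unfold BB. rewrite (proj1 (Bd s a hs)). ring.
  - intros a. unfold BB. rewrite (proj2 (Bd s a hs)). ring. }
rewrite !Een.
destruct (Rle_lt_or_eq_dec 0 t Ht) as [Htp | Ht0]; [| rewrite <- Ht0; reflexivity].
destruct (MVT_gen (fun s => -lam * I1 s + I2 s) 0 t (fun _ => 0)) as [c0 [_ Hc0]].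
- intros x hx. rewrite Rmin_left, Rmax_right in hx by lra.
  rewrite <- (Z x) by lra. apply DE.
- intros x _. apply continuity_pt_filterlim. apply (ex_derive_continuous (fun s => -lam * I1 s + I2 s)).
  eexists. apply DE.
- simpl in Hc0. lra.
Qed.
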